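(* Let $0<\sigma<2$ and let $p(\zeta)=(|\zeta|^2+|\zeta|^{2-\sigma})^{1/2}$ for $\zeta\in\mathbb{R}^3$. Let $a,b,c\in\mathbb{R}^3$ with $a=b+c$ and $|c|\le\min\{|a|,|b|\}$. If $|b|\ge1$, then \[ |p(a)-p(b)-p(c)|\gtrsim \frac{|c|}{1+(|a||c|)^\sigma}+|c|\big(1-\cos[a,c]+1-\cos[a,b]\big). \] Moreover, if $|c|<1$, then \[ |p(a)-p(b)-p(c)|\gtrsim\frac{|c|^{(2-\sigma)/2}}{(1+|b|^\sigma)^{1/2}} . \]
   Context: $[x,y]$ denotes the angle between vectors $x,y\in\mathbb{R}^3$. Implicit constants depend only on $\sigma$. *)

(* Defs.v *)
From Stdlib Require Import Reals.
Open Scope R_scope.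

Definition vec3 : Type := (R * R * R)%type.

Definition vadd (x y : vec3) : vec3 :=
  let '(x1, x2, x3) := x in let '(y1, y2, y3) := y in (x1 + y1, x2 + y2, x3 + y3).

Definition vdot (x y : vec3) : R :=
  let '(x1, x2, x3) := x in let '(y1, y2, y3) := y in x1 * y1 + x2 * y2 + x3 * y3.

Definition vnorm (x : vec3) : R := sqrt (vdot x x).

(* t^s for t >= 0 and s > 0, with the convention 0^s = 0
   (Stdlib's Rpower 0 s would be 1, since ln 0 = 0). *)
Definition rpow (t s : R) : R := if Req_EM_T t 0 then 0 else Rpower t s.

(* the angle [x,y] between x and y (acos of the normalized dot product;
   Stdlib's acos clamps its argument to [-1,1]). *)
Definition angle (x y : vec3) : R := acos (vdot x y / (vnorm x * vnorm y)).

Definition psym (sigma : R) (z : vec3) : R :=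
  sqrt (vnorm z ^ 2 + rpow (vnorm z) (2 - sigma)).

(* Main.v *)
Require Import Defs.
From Stdlib Require Import Reals Lra Psatz.
Open Scope R_scope.

Lemma ln_le' x y : 0 < x -> x <= y -> ln x <= ln y.
Proof. intros Hx [H|H]. left; apply ln_increasing; lra. subst; lra. Qed.

Lemma exp_le' x y : x <= y -> exp x <= exp y.
Proof. intros [H|H]. left; apply exp_increasing; lra. subst; lra. Qed.

Lemma rpow_pos_eq x y : 0 < x -> rpow x y = exp (y * ln x).
Proof. intros Hx. unfold rpow. destruct (Req_EM_T x 0); [lra|reflexivity]. Qed.

Definition F (sg x : R) := sqrt (x ^ 2 + rpow x (2 - sg)).
Definition H (sg x : R) := exp (- sg * ln x).

Lemma H_pos sg x : 0 < H sg x.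
Proof. apply exp_pos. Qed.

Lemma F_eq sg x : 0 < x -> F sg x = x * sqrt (1 + H sg x).
Proof.
  intros Hx. unfold F, H. rewrite rpow_pos_eq by lra.
  replace ((2 - sg) * ln x) with (ln x + ln x + (- sg * ln x)) by ring.
  rewrite !exp_plus, exp_ln by lra.
  replace (x ^ 2 + x * x * exp (- sg * ln x)) with ((x*x) * (1 + exp (- sg * ln x))) by ring.
  rewrite sqrt_mult, sqrt_square; try lra; try nra. pose proof (exp_pos (- sg * ln x)); lra.
Qed.

Lemma H_anti sg x y : 0 < sg -> 0 < x -> x <= y -> H sg y <= H sg x.
Proof. intros Hs Hx Hxy. unfold H. apply exp_le'. pose proof (ln_le' x y Hx Hxy). nra. Qed.

Lemma H_double sg x : 0 < x -> H sg (2 * x) = exp (- sg * ln 2) * H sg x.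
Proof. intros Hx. unfold H. rewrite ln_mult by lra. rewrite <- exp_plus. f_equal; ring. Qed.

Lemma H_1 sg : H sg 1 = 1.
Proof. unfold H. rewrite ln_1, Rmult_0_r. apply exp_0. Qed.

Lemma P_mono sg x y : sg < 2 -> 0 < y -> y <= x -> rpow y (2 - sg) <= rpow x (2 - sg).
Proof. intros Hs Hy Hxy. rewrite !rpow_pos_eq by lra. apply exp_le'.
  pose proof (ln_le' y x Hy Hxy). nra. Qed.

Lemma F_mono sg x y : sg < 2 -> 0 < y -> y <= x -> F sg y <= F sg x.
Proof. intros. unfold F. apply sqrt_le_1_alt. pose proof (P_mono sg x y H0 H1 H2). nra. Qed.

Lemma F_diff sg x y : 0 < sg < 2 -> 1 <= x -> 0 < y -> y <= x -> (x - y) / 4 <= F sg x - F sg y.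
Proof.
  intros Hs Hx Hy Hxy.
  pose proof (F_mono sg x y ltac:(lra) Hy Hxy) as Hm.
  assert (Fx2 : F sg x ^ 2 = x^2 + rpow x (2 - sg)).
  { unfold F. rewrite pow2_sqrt; auto. rewrite rpow_pos_eq by lra. pose proof (exp_pos ((2 - sg) * ln x)). nra. }
  assert (Fy2 : F sg y ^ 2 = y^2 + rpow y (2 - sg)).
  { unfold F. rewrite pow2_sqrt; auto. rewrite rpow_pos_eq by lra. pose proof (exp_pos ((2 - sg) * ln y)). nra. }
  pose proof (P_mono sg x y ltac:(lra) Hy Hxy) as HP.
  assert (Fxb : F sg x <= 2 * x).
  { rewrite F_eq by lra. pose proof (H_anti sg 1 x ltac:(lra) ltac:(lra) Hx). rewrite H_1 in H0.
    assert (sqrt (1 + H sg x) <= 2). { rewrite <- (sqrt_square 2) by lra. apply sqrt_le_1_alt. lra. }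
    nra. }
  assert (Fy0 : 0 <= F sg y) by (unfold F; apply sqrt_pos).
  assert (Hd : F sg x ^ 2 - F sg y ^ 2 >= x^2 - y^2) by lra.
  assert (Fxp : 0 < F sg x).
  { rewrite F_eq by lra. apply Rmult_lt_0_compat; [lra|]. apply sqrt_lt_R0. pose proof (H_pos sg x); lra. }
  (* (Fx - Fy)(Fx+Fy) >= x^2-y^2 >= (x-y) x, and Fx+Fy <= 4x *)
  assert ((F sg x - F sg y) * (F sg x + F sg y) >= (x - y) * x) by nra.
  assert ((F sg x - F sg y) * (4 * x) >= (x - y) * x) by nra.
  set (D := F sg x - F sg y) in *. destruct (Rlt_or_le (4 * D) (x - y)) as [Hc|Hc]; [|lra].
  exfalso. assert (0 < x * ((x - y) - 4 * D)) by (apply Rmult_lt_0_compat; lra). lra.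
Qed.

Lemma q_bounds sg : 0 < sg -> 0 < exp (- sg * ln 2) < 1.
Proof. intros Hs. split. apply exp_pos. rewrite <- exp_0. apply exp_increasing.
  assert (0 < ln 2) by (rewrite <- ln_1; apply ln_increasing; lra). nra. Qed.

Lemma E_bound sg r s : 0 < sg < 2 -> 0 < s -> s <= r ->
  (1 - exp (- sg * ln 2)) * s * H sg s <=
  2 * (F sg r + F sg s - F sg (r + s)) * sqrt (1 + H sg s).
Proof.
  intros Hs Hs0 Hsr.
  rewrite !F_eq by lra.
  set (q := exp (- sg * ln 2)).
  pose proof (q_bounds sg ltac:(lra)) as Hq; fold q in Hq.
  set (h := H sg s).
  pose proof (H_pos sg s) as hp; fold h in hp.
  assert (Hrs : H sg (r + s) <= q * h).
  { unfold h, q. rewrite <- H_double by lra. apply H_anti; lra. }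
  pose proof (H_pos sg (r+s)) as Hp2.
  assert (Hr : H sg (r + s) <= H sg r) by (apply H_anti; lra).
  set (gs := sqrt (1 + h)). set (gt := sqrt (1 + H sg (r+s))). set (gr := sqrt (1 + H sg r)).
  assert (gs2 : gs * gs = 1 + h) by (apply sqrt_sqrt; lra).
  assert (gt2 : gt * gt = 1 + H sg (r+s)) by (apply sqrt_sqrt; lra).
  assert (gt0 : 0 <= gt) by apply sqrt_pos.
  assert (gs0 : 0 <= gs) by apply sqrt_pos.
  assert (gtr : gt <= gr) by (apply sqrt_le_1_alt; lra).
  assert (gts : gt <= gs) by (apply sqrt_le_1_alt; nra).
  assert (Hd : (gs - gt) * (gs + gt) >= (1 - q) * h) by nra.
  assert (Hd2 : (gs - gt) * (2 * gs) >= (1 - q) * h) by nra.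
  assert (r * gr + s * gs - (r + s) * gt >= s * (gs - gt)) by nra.
  nra.
Qed.

Lemma vdot_nn x : 0 <= vdot x x.
Proof. destruct x as [[x1 x2] x3]; simpl; nra. Qed.

Lemma vnorm_sq x : vnorm x * vnorm x = vdot x x.
Proof. unfold vnorm. apply sqrt_sqrt, vdot_nn. Qed.

Lemma vnorm_nn x : 0 <= vnorm x.
Proof. apply sqrt_pos. Qed.

Lemma CS x y : Rabs (vdot x y) <= vnorm x * vnorm y.
Proof.
  assert (Hl : vdot x y * vdot x y <= vdot x x * vdot y y).
  { destruct x as [[x1 x2] x3], y as [[y1 y2] y3]; simpl.
    assert (0 <= (x1*y2-x2*y1)^2 + (x1*y3-x3*y1)^2 + (x2*y3-x3*y2)^2) by (apply Rplus_le_le_0_compat; [apply Rplus_le_le_0_compat|]; apply pow2_ge_0).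
    assert (E : (x1 * x1 + x2 * x2 + x3 * x3) * (y1 * y1 + y2 * y2 + y3 * y3) - (x1 * y1 + x2 * y2 + x3 * y3) * (x1 * y1 + x2 * y2 + x3 * y3) = (x1*y2-x2*y1)^2 + (x1*y3-x3*y1)^2 + (x2*y3-x3*y2)^2) by ring.
    lra. }
  rewrite <- (vnorm_sq x), <- (vnorm_sq y) in Hl.
  pose proof (vnorm_nn x). pose proof (vnorm_nn y).
  assert (Hl' : Rsqr (vdot x y) <= Rsqr (vnorm x * vnorm y)) by (unfold Rsqr; nra).
  apply Rsqr_le_abs_0 in Hl'. rewrite (Rabs_right (vnorm x * vnorm y)) in Hl' by nra. exact Hl'.
Qed.

Lemma angle_cos x y : 0 < vnorm x -> 0 < vnorm y ->
  cos (angle x y) = vdot x y / (vnorm x * vnorm y).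
Proof.
  intros Hx Hy. unfold angle. apply cos_acos.
  pose proof (CS x y) as Hc.
  set (k := vdot x y / (vnorm x * vnorm y)).
  assert (Hk : vdot x y = k * (vnorm x * vnorm y)) by (unfold k; field; lra).
  rewrite Hk in Hc. rewrite Rabs_mult, (Rabs_right (vnorm x * vnorm y)) in Hc by nra.
  assert (Hk1 : Rabs k <= 1).
  { destruct (Rle_or_lt (Rabs k) 1); auto. assert (0 < vnorm x * vnorm y) by nra. nra. }
  revert Hk1. unfold Rabs. destruct (Rcase_abs k); lra.
Qed.

Lemma ln_ge_half t : 1/2 <= t -> - ln 2 <= ln t.
Proof. intros Ht. assert (Hl : 0 <= ln (2 * t)).
  { rewrite <- ln_1. apply ln_le'; lra. }
  rewrite ln_mult in Hl by lra. lra. Qed.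

Theorem lemma4p1 :
  forall sigma : R, 0 < sigma < 2 ->
  exists C : R, 0 < C /\
  forall a b c : vec3,
    a = vadd b c ->
    vnorm c <= Rmin (vnorm a) (vnorm b) ->
    1 <= vnorm b ->
    (C * (vnorm c / (1 + rpow (vnorm a * vnorm c) sigma)
          + vnorm c * ((1 - cos (angle a c)) + (1 - cos (angle a b))))
       <= Rabs (psym sigma a - psym sigma b - psym sigma c))
    /\
    (vnorm c < 1 ->
     C * (rpow (vnorm c) ((2 - sigma) / 2) / sqrt (1 + rpow (vnorm b) sigma))
       <= Rabs (psym sigma a - psym sigma b - psym sigma c)).
Proof.
  intros sg Hsg.
  set (q := exp (- sg * ln 2)).
  pose proof (q_bounds sg ltac:(lra)) as Hq; fold q in Hq.
  exists ((1 - q) * q / 16). split; [apply Rmult_lt_0_compat; [nra|lra]|].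
  intros a b c Ha Hmin Hb.
  assert (Haa : vdot a a = vdot b b + 2 * vdot b c + vdot c c)
    by (subst a; destruct b as [[? ?] ?], c as [[? ?] ?]; simpl; ring).
  assert (Hac : vdot a c = vdot b c + vdot c c)
    by (subst a; destruct b as [[? ?] ?], c as [[? ?] ?]; simpl; ring).
  assert (Hab : vdot a b = vdot b b + vdot b c)
    by (subst a; destruct b as [[? ?] ?], c as [[? ?] ?]; simpl; ring).
  pose proof (CS b c) as CSbc. pose proof (CS a c) as CSac.
  rewrite <- (vnorm_sq a) in Haa.
  rewrite <- (vnorm_sq b) in Haa, Hab.
  rewrite <- (vnorm_sq c) in Haa, Hac.
  change (psym sg a) with (F sg (vnorm a)).
  change (psym sg b) with (F sg (vnorm b)).
  change (psym sg c) with (F sg (vnorm c)).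
  assert (Hst : vnorm c <= vnorm a) by (eapply Rle_trans; [exact Hmin| apply Rmin_l]).
  assert (Hsr : vnorm c <= vnorm b) by (eapply Rle_trans; [exact Hmin| apply Rmin_r]).
  pose proof (vnorm_nn a) as n1. pose proof (vnorm_nn b) as n2. pose proof (vnorm_nn c) as n3.
  set (t := vnorm a) in *. set (r := vnorm b) in *. set (s := vnorm c) in *.
  set (bc := vdot b c) in *.
  destruct (Req_dec s 0) as [Hs0|Hs0].
  { rewrite Hs0. unfold rpow at 2. destruct (Req_EM_T 0 0) as [_|]; [|lra].
    unfold Rdiv. rewrite !Rmult_0_l, Rplus_0_l, !Rmult_0_r.
    split; [|intros _]; apply Rabs_pos. }
  assert (Hs : 0 < s) by lra. clear Hs0.
  pose proof (Rle_abs bc) as ab1. pose proof (Rle_abs (-bc)) as ab2. rewrite Rabs_Ropp in ab2.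
  pose proof (Rle_abs (vdot a c)) as ab3. pose proof (Rle_abs (- vdot a c)) as ab4. rewrite Rabs_Ropp in ab4.
  assert (Htri1 : t <= r + s) by nra.
  assert (Htri2 : r <= t + s) by nra.
  assert (Ht : 0 < t) by lra.
  set (h := H sg s).
  set (gs := sqrt (1 + h)).
  pose proof (E_bound sg r s Hsg Hs Hsr) as HE. fold q h gs in HE.
  set (E := F sg r + F sg s - F sg (r + s)) in *.
  pose proof (F_diff sg (r + s) t Hsg ltac:(lra) Ht Htri1) as HD.
  assert (Habs : E + (F sg (r + s) - F sg t) <= Rabs (F sg t - F sg r - F sg s)).
  { rewrite <- Rabs_Ropp. eapply Rle_trans; [|apply Rle_abs]. unfold E. lra. }
  assert (hp : 0 < h) by apply H_pos.
  assert (gs2 : gs * gs = 1 + h) by (apply sqrt_sqrt; lra).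
  assert (gs0 : 0 <= gs) by apply sqrt_pos.
  assert (gs1 : 1 <= gs) by nra.
  assert (Epos : 0 < E).
  { assert (0 < (1 - q) * s * h) by (apply Rmult_lt_0_compat; [apply Rmult_lt_0_compat|]; lra).
    destruct (Rle_or_lt E 0) as [Hc|Hc]; [|exact Hc].
    assert (0 <= (- E) * gs) by (apply Rmult_le_pos; lra). lra. }
  split.
  - rewrite (angle_cos a c), (angle_cos a b) by (fold t r s; lra). fold t r s.
    rewrite Hac, Hab.
    set (u1 := 1 - (bc + s * s) / (t * s)).
    set (u2 := 1 - (r * r + bc) / (t * r)).
    assert (Hu1 : t * (s * u1) = t * s - bc - s * s) by (unfold u1; field; lra).
    assert (Hu2 : t * r * (s * u2) = s * (t * r - r * r - bc)) by (unfold u2; field; lra).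
    assert (HD1 : s * u1 <= r + s - t).
    { assert (0 <= (r + s - t) * (t + s - r)) by nra.
      assert (t * (s * u1) <= t * (r + s - t)) by nra. nra. }
    assert (HD2 : s * u2 <= r + s - t).
    { assert (0 <= 2 * t * r - s * (s + t - r)) by nra.
      assert (0 <= (r + s - t) * (2 * t * r - s * (s + t - r))) by nra.
      assert (t * r * (s * u2) <= t * r * (r + s - t)) by nra.
      assert (0 < t * r) by nra. nra. }
    rewrite rpow_pos_eq by nra. rewrite ln_mult by lra.
    set (R1 := exp (sg * (ln t + ln s))).
    assert (HR1 : q <= R1 * h).
    { unfold R1, h, H, q. rewrite <- exp_plus. apply exp_le'.
      pose proof (ln_ge_half t ltac:(lra)). nra. }
    assert (R1p : 0 < R1) by apply exp_pos.
    assert (Hgs : gs <= 1 + h) by nra.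
    assert (HX : q * gs <= (1 + R1) * h) by nra.
    assert (HE2 : (1 - q) * q * s <= 2 * E * (1 + R1)).
    { assert ((1 - q) * q * s * gs <= 2 * E * (1 + R1) * gs).
      { assert ((1 - q) * s * (q * gs) <= (1 - q) * s * ((1 + R1) * h)).
        { apply Rmult_le_compat_l; [nra|exact HX]. }
        nra. }
      nra. }
    assert (HX1 : (1 - q) * q / 16 * (s / (1 + R1)) <= E / 8).
    { replace ((1 - q) * q / 16 * (s / (1 + R1))) with ((1 - q) * q * s / (16 * (1 + R1))) by (field; lra).
      apply (Rmult_le_reg_r (16 * (1 + R1))); [lra|].
      unfold Rdiv. rewrite Rmult_assoc, Rinv_l, Rmult_1_r by lra. nra. }
    assert (HC : (1 - q) * q / 16 * (s * (u1 + u2)) <= (r + s - t) / 8).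
    { assert (0 < (1 - q) * q / 16 < 1/16) by nra. nra. }
    rewrite Rmult_plus_distr_l.
    replace (s * (1 - (bc + s * s) / (t * s) + (1 - (r * r + bc) / (t * r)))) with (s * (u1 + u2)) by (unfold u1, u2; ring).
    lra.
  - intros Hs1.
    rewrite !rpow_pos_eq by lra.
    set (m := exp (- sg / 2 * ln s)).
    assert (Hm : exp ((2 - sg) / 2 * ln s) = s * m).
    { unfold m. replace ((2 - sg) / 2 * ln s) with (ln s + (- sg / 2 * ln s)) by field.
      rewrite exp_plus, exp_ln by lra. reflexivity. }
    assert (Hmm : m * m = h).
    { unfold m, h, H. rewrite <- exp_plus. f_equal. field. }
    assert (mp : 0 < m) by apply exp_pos.
    assert (h1 : 1 < h).
    { unfold h, H. rewrite <- exp_0. apply exp_increasing.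
      assert (ln s < 0) by (rewrite <- ln_1; apply ln_increasing; lra). nra. }
    assert (Hgm : gs <= 2 * m) by nra.
    assert (HE3 : (1 - q) * s * m <= 4 * E).
    { assert ((1 - q) * s * m * m <= 4 * E * m) by nra. nra. }
    rewrite Hm.
    set (den := sqrt (1 + exp (sg * ln r))).
    assert (den1 : 1 <= den).
    { rewrite <- sqrt_1. apply sqrt_le_1_alt. pose proof (exp_pos (sg * ln r)). lra. }
    assert (HX2 : s * m / den <= s * m).
    { apply (Rmult_le_reg_r den); [lra|]. unfold Rdiv. rewrite Rmult_assoc, Rinv_l, Rmult_1_r by lra. assert (0 < s * m) by (apply Rmult_lt_0_compat; lra). nra. }
    assert (0 <= s * m / den) by (unfold Rdiv; apply Rmult_le_pos; [nra|left; apply Rinv_0_lt_compat; lra]).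
    assert ((1 - q) * q / 16 * (s * m / den) <= (1 - q) / 4 * (s * m)).
    { assert (0 < (1 - q) * q / 16 <= (1 - q) / 4) by nra. nra. }
    nra.
Qed.
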